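(* Let $n\ge2$, $T_j>0$, and let $\vec w_j^*=\vec w_j^{(1,T_j)}$ be the winner-take-all prize structure, with $w^*_{j,1}=T_j$ and all other prizes $0$. Let $\vec w_j'$ be any prize structure with $w'_{j,1}\ge\dots\ge w'_{j,n}\ge0$ and $\sum_kw'_{j,k}\le T_j$. Then $x_{\vec w_j^*}$ single-crossing-dominates $x_{\vec w_j'}$.
   Context: Interim allocation function. For a prize structure $\vec w=(w_1,\dots,w_n)$, $x_{\vec w}(\phi):=\sum_{k=1}^n w_k\binom{n-1}{k-1}\phi^{k-1}(1-\phi)^{n-k}$ on $[0,1]$. In particular $x_{\vec w_j^*}(\phi)=T_j(1-\phi)^{n-1}$. Single-crossing. For functions $f,g$ on $[0,1]$, $f$ is single-crossing with respect to $g$ if there is $\phi_0\in[0,1]$ with $f\ge g$ on $[0,\phi_0)$ and $f\le g$ on $(\phi_0,1]$. Single-crossing dominance. An interim allocation function $x$ single-crossing-dominates $\tilde x$ if all of the following hold: 1. $\int_0^1x\ge\int_0^1\tilde x$; 2. $x$ is single-crossing with respect to $\tilde x$; 3. $-x'$ is single-crossing with respect to $-\tilde x'$. *)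

(* Defs.v *)
From Stdlib Require Import Reals.
From Coquelicot Require Import Coquelicot.
Open Scope R_scope.

(* A prize structure w = (w_1,...,w_n) is a function nat -> R; only the
   indices 1..n are used. *)

Definition interim (n : nat) (w : nat -> R) (phi : R) : R :=
  sum_n_m (fun k => w k * Binomial.C (n - 1) (k - 1)
                     * phi ^ (k - 1) * (1 - phi) ^ (n - k)) 1 n.

Definition winner_take_all (T : R) : nat -> R :=
  fun k => if Nat.eqb k 1 then T else 0.

Definition single_crossing (f g : R -> R) : Prop :=
  exists phi0, 0 <= phi0 <= 1 /\
    (forall phi, 0 <= phi < phi0 -> f phi >= g phi) /\
    (forall phi, phi0 < phi <= 1 -> f phi <= g phi).

Definition sc_dominates (x xt : R -> R) : Prop :=
  RInt x 0 1 >= RInt xt 0 1 /\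
  single_crossing x xt /\
  single_crossing (fun phi => - Derive x phi) (fun phi => - Derive xt phi).

(* Main.v *)
Require Import Defs.
From Stdlib Require Import Reals Lra Lia Classical Arith Factorial.
From Coquelicot Require Import Coquelicot.
Open Scope R_scope.

Definition B (m j : nat) (x : R) := Binomial.C m j * x ^ j * (1 - x) ^ (m - j).
Definition dB (m j : nat) (x : R) := Binomial.C m j * (INR j * x ^ (pred j) * (1 - x) ^ (m - j) - x ^ j * (INR (m - j) * (1 - x) ^ (pred (m - j)))).

Lemma is_derive_B m j x : is_derive (B m j) x (dB m j x).
Proof. unfold B, dB. auto_derive. auto. change (1 + - x) with (1 - x). ring. Qed.

Lemma B_cont m j x : continuous (B m j) x.
Proof. apply (ex_derive_continuous (B m j) x). eexists. apply is_derive_B. Qed.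

Lemma B_ex_RInt m j a b : ex_RInt (B m j) a b.
Proof. apply (ex_RInt_continuous (V:=R_CompleteNormedModule)). intros; apply B_cont. Qed.

Lemma interim_B m w x : interim (S m) w x = sum_f_R0 (fun j => w (S j) * B m j x) m.
Proof.
  unfold interim. rewrite <- sum_n_m_S, <- sum_n_Reals. unfold sum_n. apply sum_n_m_ext; intro j.
  unfold B. rewrite !Nat.sub_succ, !Nat.sub_0_r. rewrite !Rmult_assoc. reflexivity.
Qed.

Lemma sum_zero_tail (f : nat -> R) m : (forall j, (1 <= j)%nat -> f j = 0) -> sum_f_R0 f m = f O.
Proof.
  intro H. induction m. reflexivity.
  simpl. rewrite IHm, (H (S m)) by lia. ring.
Qed.

Lemma interim_winner m T x : interim (S m) (winner_take_all T) x = T * (1 - x) ^ m.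
Proof.
  rewrite interim_B, sum_zero_tail.
  - unfold B, winner_take_all. rewrite C_n_0, Nat.sub_0_r. simpl. ring.
  - intros j Hj. destruct j. lia. change (0 * B m (S j) x = 0). apply Rmult_0_l.
Qed.

Lemma sum_shift (f : nat -> R) m : sum_f_R0 f (S m) = f O + sum_f_R0 (fun j => f (S j)) m.
Proof. induction m. simpl. ring. rewrite tech5, IHm. simpl. ring. Qed.

Lemma is_RInt_sum (f : nat -> R -> R) m a b :
  (forall j, ex_RInt (f j) a b) ->
  is_RInt (fun x => sum_f_R0 (fun j => f j x) m) a b (sum_f_R0 (fun j => RInt (f j) a b) m).
Proof.
  intro H. induction m.
  - simpl. apply (RInt_correct (V:=R_CompleteNormedModule)), H.
  - simpl. apply (is_RInt_plus _ _ _ _ _ _ IHm). apply (RInt_correct (V:=R_CompleteNormedModule)), H.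
Qed.

Lemma RInt_B_step m j : (j < m)%nat -> RInt (B m (S j)) 0 1 = RInt (B m j) 0 1.
Proof.
  intro Hj.
  pose (df := fun x => INR (S j) * (B m j x - B m (S j) x)).
  assert (H1 : is_RInt df 0 1 (minus (Binomial.C m j * (1 ^ (S j) * (1 - 1) ^ (m - j))) (Binomial.C m j * (0 ^ (S j) * (1 - 0) ^ (m - j))))).
  { apply (is_RInt_derive (fun x => Binomial.C m j * (x ^ (S j) * (1 - x) ^ (m - j))) df).
    - intros x _. unfold df, B. auto_derive. auto.
      replace (pred (m - j)) with (m - S j)%nat by lia.
      rewrite (pascal_step3 m j Hj). simpl pred.
      replace (m - j)%nat with (S (m - S j)) by lia.
      change (match j with 0%nat => 1 | S _ => INR j + 1 end) with (INR (S j)).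
      change (1 + - x) with (1 - x).
      assert (HS : INR (S j) <> 0) by (apply not_0_INR; lia).
      simpl pow. field. exact HS.
    - intros x _. apply (ex_derive_continuous df x). unfold df, B. auto_derive. auto. }
  apply (is_RInt_unique (V:=R_CompleteNormedModule)) in H1.
  assert (E : RInt df 0 1 = INR (S j) * (RInt (B m j) 0 1 - RInt (B m (S j)) 0 1)).
  { unfold df. change (RInt (fun x => scal (INR (S j)) (minus (B m j x) (B m (S j) x))) 0 1 =
      scal (INR (S j)) (minus (RInt (B m j) 0 1) (RInt (B m (S j)) 0 1))).
    rewrite (RInt_scal (V:=R_CompleteNormedModule)).
    rewrite (RInt_minus (V:=R_CompleteNormedModule)). reflexivity.
    apply B_ex_RInt. apply B_ex_RInt.
    apply (ex_RInt_minus (V:=R_CompleteNormedModule)); apply B_ex_RInt. }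
  rewrite E, Rminus_diag, Rminus_0_r, pow1, !pow_i in H1 by lia.
  assert (HS : INR (S j) <> 0) by (apply not_0_INR; lia).
  change (minus (Binomial.C m j * (1 * 0)) (Binomial.C m j * (0 * 1))) with (Binomial.C m j * (1 * 0) - Binomial.C m j * (0 * 1)) in H1.
  assert (H3 : INR (S j) * (RInt (B m j) 0 1 - RInt (B m (S j)) 0 1) = 0). { rewrite H1. unfold minus, plus, opp. simpl. rewrite !Rmult_0_r, !Rmult_0_l, Rmult_0_r. apply Rplus_opp_r. }
  apply Rmult_integral in H3. destruct H3 as [H3|H3]. contradiction. lra.
Qed.

Lemma sc_lemma (f g : R -> R) :
  (forall psi phi, 0 <= psi < phi -> phi < 1 -> f phi >= g phi -> f psi >= g psi) ->
  (f 1 <= g 1 \/ (forall phi, 0 <= phi <= 1 -> f phi >= g phi)) -> single_crossing f g.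
Proof.
  intros Hdown [H1|Hall].
  2:{ exists 1. split. lra. split. intros; apply Hall; lra. intros; lra. }
  set (E := fun x => 0 <= x < 1 /\ f x >= g x).
  destruct (classic (exists x, E x)) as [Hne|Hempty].
  - assert (Hb : bound E). { exists 1. intros y [Hy _]. lra. }
    destruct (completeness E Hb Hne) as [l [Hub Hlub]].
    destruct Hne as [x0 Hx0].
    assert (Hl0 : x0 <= l) by (apply Hub; exact Hx0).
    assert (Hl1 : l <= 1). { apply Hlub. intros y [Hy _]. lra. }
    destruct Hx0 as [Hx0a Hx0b].
    exists l. split. lra. split.
    + intros phi [Hp0 Hpl].
      destruct (classic (exists s, E s /\ phi < s)) as [[s [[Hs1 Hs2] Hs3]]|Hno].
      * apply (Hdown phi s); lra.
      * exfalso. assert (l <= phi). { apply Hlub. intros y Hy. destruct (Rle_dec y phi); auto.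
          exfalso. apply Hno. exists y. split; auto; lra. } lra.
    + intros phi [Hp0 Hp1]. destruct (Req_dec phi 1) as [->|Hne1]. exact H1.
      destruct (Rle_dec (f phi) (g phi)) as [|Hn]; auto. exfalso. apply Rnot_le_lt in Hn.
      assert (phi < 1) by (destruct (Rle_lt_or_eq_dec _ _ Hp1); [auto | contradiction]).
      assert (phi <= l). { apply Hub. split. lra. lra. } lra.
  - exists 0. split. lra. split. intros; lra.
    intros phi [Hp0 Hp1]. destruct (Req_dec phi 1) as [->|Hne1]. exact H1.
    destruct (Rle_dec (f phi) (g phi)) as [|Hn]; auto. exfalso. apply Rnot_le_lt in Hn.
    assert (phi < 1) by (destruct (Rle_lt_or_eq_dec _ _ Hp1); [auto | contradiction]).
    apply Hempty. exists phi. split. lra. lra.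
Qed.

Definition tt (x : R) := x / (1 - x).

Lemma tt_pow x a b : x < 1 -> x ^ a * (1 - x) ^ b = tt x ^ a * (1 - x) ^ (a + b).
Proof.
  intro Hx. unfold tt. rewrite pow_add, <- Rmult_assoc, <- Rpow_mult_distr.
  unfold Rdiv. rewrite Rmult_assoc, Rinv_l, Rmult_1_r. reflexivity. lra.
Qed.

Lemma tt_mono psi phi : 0 <= psi <= phi -> phi < 1 -> 0 <= tt psi <= tt phi.
Proof.
  intros H Hp. unfold tt, Rdiv. split.
  apply Rmult_le_pos. lra. left; apply Rinv_0_lt_compat; lra.
  apply Rmult_le_compat; try lra. left; apply Rinv_0_lt_compat; lra.
  apply Rinv_le_contravar; lra.
Qed.

Lemma poly_decr (c : nat -> R) p s t :
  (forall j, (1 <= j <= p)%nat -> c j <= 0) -> 0 <= s <= t ->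
  sum_f_R0 (fun j => c j * t ^ j) p <= sum_f_R0 (fun j => c j * s ^ j) p.
Proof.
  intros Hc Hst. apply sum_Rle. intros j Hj. destruct j. simpl; lra.
  assert (c (S j) <= 0) by (apply Hc; lia).
  assert (s ^ S j <= t ^ S j) by (apply pow_incr; lra). nra.
Qed.

Lemma poly_incr (c : nat -> R) p s t :
  (forall j, (j <= p)%nat -> 0 <= c j) -> 0 <= s <= t ->
  sum_f_R0 (fun j => c j * s ^ j) p <= sum_f_R0 (fun j => c j * t ^ j) p.
Proof.
  intros Hc Hst. apply sum_Rle. intros j Hj.
  assert (0 <= c j) by (apply Hc; lia).
  assert (s ^ j <= t ^ j) by (apply pow_incr; lra). nra.
Qed.

Lemma C_nonneg n k : (k <= n)%nat -> 0 <= Binomial.C n k.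
Proof.
  intro. unfold Binomial.C. apply Rmult_le_pos. apply pos_INR.
  left. apply Rinv_0_lt_compat. apply Rmult_lt_0_compat; apply INR_fact_lt_0.
Qed.

Lemma B_nonneg m j x : (j <= m)%nat -> 0 <= x <= 1 -> 0 <= B m j x.
Proof.
  intros Hj Hx. unfold B. apply Rmult_le_pos. apply Rmult_le_pos. now apply C_nonneg.
  apply pow_le; lra. apply pow_le; lra.
Qed.

Lemma RInt_B_all m j : (j <= m)%nat -> RInt (B m j) 0 1 = RInt (B m 0) 0 1.
Proof.
  induction j; intro Hj. reflexivity.
  rewrite RInt_B_step by lia. apply IHj. lia.
Qed.

Lemma RInt_B0_nonneg m : 0 <= RInt (B m 0) 0 1.
Proof.
  apply RInt_ge_0. lra. apply B_ex_RInt. intros x Hx. apply B_nonneg; lia || lra.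
Qed.

Lemma RInt_wB c m j : RInt (fun x => c * B m j x) 0 1 = c * RInt (B m j) 0 1.
Proof.
  change (RInt (fun x => scal c (B m j x)) 0 1 = scal c (RInt (B m j) 0 1)).
  apply (RInt_scal (V:=R_CompleteNormedModule)). apply B_ex_RInt.
Qed.

Lemma RInt_interim m w :
  RInt (interim (S m) w) 0 1 = RInt (B m 0) 0 1 * sum_f_R0 (fun j => w (S j)) m.
Proof.
  assert (H : is_RInt (interim (S m) w) 0 1 (sum_f_R0 (fun j => RInt (fun x => w (S j) * B m j x) 0 1) m)).
  { apply (is_RInt_ext (fun x => sum_f_R0 (fun j => (fun j x => w (S j) * B m j x) j x) m)).
    intros x _. symmetry. apply interim_B.
    apply is_RInt_sum. intro j.
    apply (ex_RInt_ext (fun x => scal (w (S j)) (B m j x))). intros; reflexivity.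
    apply (ex_RInt_scal (V:=R_CompleteNormedModule)). apply B_ex_RInt. }
  apply (is_RInt_unique (V:=R_CompleteNormedModule)) in H. rewrite H.
  rewrite scal_sum. apply sum_eq. intros j Hj. rewrite RInt_wB, RInt_B_all by lia. ring.
Qed.

Lemma is_derive_sumB m w N x :
  is_derive (fun x => sum_f_R0 (fun j => w (S j) * B m j x) N) x (sum_f_R0 (fun j => w (S j) * dB m j x) N).
Proof.
  induction N.
  - simpl. apply is_derive_scal. apply is_derive_B.
  - simpl. apply (is_derive_plus (K:=R_AbsRing) (V:=R_NormedModule)). exact IHN.
    apply is_derive_scal. apply is_derive_B.
Qed.

Lemma Derive_interim m w x : Derive (interim (S m) w) x = sum_f_R0 (fun j => w (S j) * dB m j x) m.
Proof.
  apply is_derive_unique.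
  apply (is_derive_ext (fun x => sum_f_R0 (fun j => w (S j) * B m j x) m)).
  intros; symmetry; apply interim_B. apply is_derive_sumB.
Qed.

Lemma Derive_winner m T x : Derive (interim (S m) (winner_take_all T)) x = - (T * (INR m * (1 - x) ^ (pred m))).
Proof.
  apply is_derive_unique.
  apply (is_derive_ext (fun x => T * (1 - x) ^ m)).
  intros; symmetry; apply interim_winner. auto_derive. auto. change (1 + - x) with (1 - x). rewrite <- Ropp_mult_distr_l, Rmult_1_l, <- Ropp_mult_distr_r. reflexivity.
Qed.

Lemma interim_fact m w x : x < 1 ->
  interim (S m) w x = (1 - x) ^ m * sum_f_R0 (fun j => (w (S j) * Binomial.C m j) * tt x ^ j) m.
Proof.
  intro Hx. rewrite interim_B, scal_sum. apply sum_eq. intros j Hj. unfold B.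
  replace (w (S j) * (Binomial.C m j * x ^ j * (1 - x) ^ (m - j))) with
    (w (S j) * Binomial.C m j * (x ^ j * (1 - x) ^ (m - j))) by ring.
  rewrite tt_pow by auto. replace (j + (m - j))%nat with m by lia. ring.
Qed.

Lemma dB_fact m j x : x < 1 -> (1 <= m)%nat -> (j <= m)%nat ->
  dB m j x = (1 - x) ^ (m - 1) * (Binomial.C m j * (INR j * tt x ^ (pred j) - INR (m - j) * tt x ^ j)).
Proof.
  intros Hx Hm Hj. unfold dB. destruct j as [|i].
  - rewrite Nat.sub_0_r, Nat.sub_1_r. change (INR 0) with 0. ring.
  - change (pred (S i)) with i.
    assert (E1 : INR (S i) * x ^ i * (1 - x) ^ (m - S i) = (1 - x) ^ (m - 1) * (INR (S i) * tt x ^ i)).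
    { rewrite Rmult_assoc, tt_pow by auto. replace (i + (m - S i))%nat with (m - 1)%nat by lia. ring. }
    assert (E2 : x ^ S i * (INR (m - S i) * (1 - x) ^ pred (m - S i)) = (1 - x) ^ (m - 1) * (INR (m - S i) * tt x ^ S i)).
    { destruct (m - S i)%nat eqn:Hk. change (INR 0) with 0. ring.
      change (pred (S n)) with n.
      replace (x ^ S i * (INR (S n) * (1 - x) ^ n)) with (INR (S n) * (x ^ S i * (1 - x) ^ n)) by ring.
      rewrite tt_pow by auto. replace (S i + n)%nat with (m - 1)%nat by lia. ring. }
    rewrite E1, E2. ring.
Qed.

Lemma reindex p w t :
  sum_f_R0 (fun j => w (S j) * (Binomial.C (S p) j * (INR j * t ^ (pred j) - INR (S p - j) * t ^ j))) (S p) =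
  sum_f_R0 (fun j => ((w (S (S j)) - w (S j)) * Binomial.C (S p) j * INR (S p - j)) * t ^ j) p.
Proof.
  rewrite (sum_eq _ (fun j => w (S j) * Binomial.C (S p) j * INR j * t ^ (pred j) - w (S j) * Binomial.C (S p) j * INR (S p - j) * t ^ j)) by (intros; ring).
  rewrite minus_sum, sum_shift, tech5, Nat.sub_diag.
  symmetry.
  rewrite (sum_eq _ (fun j => w (S (S j)) * Binomial.C (S p) (S j) * INR (S j) * t ^ (pred (S j)) - w (S j) * Binomial.C (S p) j * INR (S p - j) * t ^ j)).
  2:{ intros j Hj. change (pred (S j)) with j. rewrite (pascal_step3 (S p) j) by lia.
      assert (INR (S j) <> 0) by (apply not_0_INR; lia). field. auto. }
  rewrite minus_sum. change (INR 0) with 0. ring.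
Qed.

Lemma C_diag n : Binomial.C n n = 1.
Proof. unfold Binomial.C. rewrite Nat.sub_diag. simpl (fact 0). simpl (INR 1). field. apply INR_fact_neq_0. Qed.

Lemma C_pred n : Binomial.C (S n) n = INR (S n).
Proof.
  rewrite pascal_step1 by lia. replace (S n - n)%nat with 1%nat by lia.
  unfold Binomial.C. replace (S n - 1)%nat with n by lia.
  replace (fact (S n)) with (S n * fact n)%nat by reflexivity. rewrite mult_INR.
  simpl (fact 1). simpl (INR 1). field. apply INR_fact_neq_0.
Qed.

Lemma sum_nonneg (f : nat -> R) N : (forall j, (j <= N)%nat -> 0 <= f j) -> 0 <= sum_f_R0 f N.
Proof.
  intro H. induction N. simpl. apply H; lia.
  simpl. apply Rplus_le_le_0_compat. apply IHN; intros; apply H; lia. apply H; lia.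
Qed.

Lemma sum_zero (f : nat -> R) N : (forall j, (j <= N)%nat -> f j = 0) -> sum_f_R0 f N = 0.
Proof.
  intro H. induction N. simpl. apply H; lia.
  simpl. rewrite IHN by (intros; apply H; lia). rewrite (H (S N)) by lia. ring.
Qed.

Lemma DerivQ p w x : x < 1 ->
  Derive (interim (S (S p)) w) x =
  (1 - x) ^ p * sum_f_R0 (fun j => ((w (S (S j)) - w (S j)) * Binomial.C (S p) j * INR (S p - j)) * tt x ^ j) p.
Proof.
  intro Hx. rewrite Derive_interim, <- reindex, scal_sum. apply sum_eq. intros j Hj.
  rewrite dB_fact; [|lra|lia|lia]. replace (S p - 1)%nat with p by lia. ring.
Qed.

Theorem mainTheorem8 (n : nat) (T : R) (w' : nat -> R) :
  (2 <= n)%nat ->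
  0 < T ->
  (forall k, (1 <= k < n)%nat -> w' k >= w' (S k)) ->
  w' n >= 0 ->
  sum_n_m w' 1 n <= T ->
  sc_dominates (interim n (winner_take_all T)) (interim n w').
Proof.
  intros Hn HT Hmono Hwn Hsum.
  destruct n as [|m]. lia.
  assert (Hnn : forall j, (j <= m)%nat -> 0 <= w' (S j)).
  { assert (Hd : forall d, (d <= m)%nat -> 0 <= w' (S (m - d))).
    { induction d; intro Hd. rewrite Nat.sub_0_r. lra.
      assert (w' (S (m - S d)) >= w' (S (S (m - S d)))) by (apply Hmono; lia).
      replace (S (m - S d)) with (m - d)%nat in H at 2 by lia.
      assert (0 <= w' (S (m - d))) by (apply IHd; lia).
      lra. }
    intros j Hj. replace j with (m - (m - j))%nat by lia. apply Hd. lia. }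
  assert (Hs : sum_f_R0 (fun j => w' (S j)) m <= T).
  { rewrite <- sum_n_Reals. unfold sum_n. rewrite sum_n_m_S. exact Hsum. }
  assert (Hwin1 : winner_take_all T 1 = T) by reflexivity.
  split; [|split].
  -
    rewrite !RInt_interim. rewrite sum_zero_tail.
    2:{ intros j Hj. destruct j. lia. reflexivity. }
    rewrite Hwin1. apply Rle_ge. apply Rmult_le_compat_l. apply RInt_B0_nonneg. exact Hs.
  -
    apply sc_lemma.
    + intros psi phi Hpsi Hphi H.
      rewrite interim_winner in H |- *. rewrite interim_fact in H |- * by lra.
      assert (Hpos : 0 < (1 - phi) ^ m) by (apply pow_lt; lra).
      assert (Hpos' : 0 < (1 - psi) ^ m) by (apply pow_lt; lra).
      assert (HP : sum_f_R0 (fun j => w' (S j) * Binomial.C m j * tt phi ^ j) m <= T).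
      { apply Rge_le in H. apply (Rmult_le_reg_l ((1 - phi) ^ m)); auto. rewrite Rmult_comm with (r1 := (1 - phi) ^ m) (r2 := T). exact H. }
      assert (HQ : sum_f_R0 (fun j => w' (S j) * Binomial.C m j * tt psi ^ j) m <= sum_f_R0 (fun j => w' (S j) * Binomial.C m j * tt phi ^ j) m).
      { apply (poly_incr (fun j => w' (S j) * Binomial.C m j)). intros j Hj. apply Rmult_le_pos. apply Hnn; auto. apply C_nonneg; auto.
        apply tt_mono; lra. }
      apply Rle_ge. rewrite Rmult_comm with (r1 := T). apply Rmult_le_compat_l; lra.
    + left. rewrite interim_winner. rewrite Rminus_diag, pow_i, Rmult_0_r by lia.
      rewrite interim_B. apply sum_nonneg. intros j Hj. apply Rmult_le_pos. apply Hnn; auto. apply B_nonneg; auto; lra.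
  -
    destruct m as [|p]. lia.
    apply sc_lemma.
    + intros psi phi Hpsi Hphi H. rewrite !Derive_winner, !DerivQ in * by lra.
      simpl pred in *.
      assert (Hpos : 0 < (1 - phi) ^ p) by (apply pow_lt; lra).
      assert (Hpos' : 0 < (1 - psi) ^ p) by (apply pow_lt; lra).
      assert (HP : 0 <= T * INR (S p) + sum_f_R0 (fun j => (w' (S (S j)) - w' (S j)) * Binomial.C (S p) j * INR (S p - j) * tt phi ^ j) p).
      { apply Rge_le in H. apply (Rmult_le_reg_l ((1 - phi) ^ p)); auto. nra. }
      assert (HQ : sum_f_R0 (fun j => (w' (S (S j)) - w' (S j)) * Binomial.C (S p) j * INR (S p - j) * tt phi ^ j) p <= sum_f_R0 (fun j => (w' (S (S j)) - w' (S j)) * Binomial.C (S p) j * INR (S p - j) * tt psi ^ j) p).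
      { apply (poly_decr (fun j => (w' (S (S j)) - w' (S j)) * Binomial.C (S p) j * INR (S p - j))). intros j Hj.
        assert (w' (S j) >= w' (S (S j))) by (apply Hmono; lia).
        assert (0 <= Binomial.C (S p) j) by (apply C_nonneg; lia).
        assert (0 <= INR (S p - j)) by apply pos_INR. 
        assert (0 <= Binomial.C (S p) j * INR (S p - j)) by (apply Rmult_le_pos; auto).
        nra. apply tt_mono; lra. }
      apply Rle_ge. assert (0 <= (1 - psi) ^ p * (T * INR (S p) + sum_f_R0 (fun j => (w' (S (S j)) - w' (S j)) * Binomial.C (S p) j * INR (S p - j) * tt psi ^ j) p)) by (apply Rmult_le_pos; lra).
      nra.
    + destruct p as [|q].
      * right. intros phi Hphi. rewrite Derive_winner, Derive_interim.
        simpl sum_f_R0. unfold dB. rewrite C_n_0, C_diag. simpl pred. simpl (1 - 0)%nat. simpl (1 - 1)%nat.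
        simpl pow. change (INR 0) with 0. change (INR 1) with 1.
        assert (0 <= w' 2%nat) by (apply (Hnn 1%nat); lia).
        simpl in Hs. lra.
      * left. rewrite !Derive_winner, Derive_interim.
        rewrite Rminus_diag. simpl pred. rewrite (pow_i (S q)) by lia.
        rewrite tech5, tech5. rewrite sum_zero.
        2:{ intros j Hj. unfold dB. rewrite Rminus_diag.
            rewrite (pow_i (S (S q) - j)) by lia. rewrite (pow_i (pred (S (S q) - j))) by lia. ring. }
        unfold dB. rewrite Rminus_diag.
        replace (S (S q) - S q)%nat with 1%nat by lia. rewrite Nat.sub_diag.
        change (pred 1) with 0%nat. change (pred 0) with 0%nat.
        rewrite !pow1, !pow_O, pow_1. rewrite C_diag, C_pred.
        change (INR 0) with 0. change (INR 1) with 1.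
        assert (Hk : w' (S (S (S q))) <= w' (S (S q))) by (apply Rge_le, Hmono; lia).
        assert (0 <= INR (S (S q))) by apply pos_INR.
        nra.
Qed.
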